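(* Let $H=(\mathcal{V},\mathcal{I})$ be an interval hypergraph and $k\geq1$ an integer. There exists a partition of $\mathcal{I}$ into $k$ parts such that each part is an exactly hittable set if and only if there exists a conflict-free colouring of $H$ with $k$ non-zero colours.
   Context: An interval hypergraph has vertex set $[n]=\{1,\dots,n\}$ and hyperedges that are nonempty sets of consecutive integers. A set (family) $\mathcal{S}$ of hyperedges is exactly hittable if there is a set $T\subseteq\mathcal{V}$ (an exact hitting set) with $|T\cap I|=1$ for every $I\in\mathcal{S}$. A conflict-free colouring of $H$ is a function $C:\mathcal{V}\to\{0,1,2,\dots\}$ such that every hyperedge $I$ contains a colour $j\geq1$ with $|I\cap C^{-1}(j)|=1$; colour $0$ is not counted among the colours used. *)

(* Defs.v *)
From mathcomp Require Import all_boot.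
Set Implicit Arguments. Unset Strict Implicit. Unset Printing Implicit Defensive.

(* Vertex set [n] is modelled by 'I_n (vertex i+1 of the paper is the ordinal i). *)

Definition is_interval (n : nat) (A : {set 'I_n}) : Prop :=
  A != set0 /\
  forall x y z : 'I_n, x \in A -> z \in A -> x <= y -> y <= z -> y \in A.

Definition interval_hypergraph (n : nat) (E : {set {set 'I_n}}) : Prop :=
  forall I, I \in E -> is_interval I.

Definition exact_hitting_set (n : nat) (S : {set {set 'I_n}}) (T : {set 'I_n}) : Prop :=
  forall I, I \in S -> #|T :&: I| = 1.

Definition exactly_hittable (n : nat) (S : {set {set 'I_n}}) : Prop :=
  exists T : {set 'I_n}, exact_hitting_set S T.

(* Conflict-free colouring with colours {0,1,...,k}; colour 0 is "uncoloured"
   and is not counted, so it uses (at most) k non-zero colours. *)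
Definition conflict_free (n k : nat) (E : {set {set 'I_n}}) (C : 'I_n -> 'I_k.+1) : Prop :=
  forall I, I \in E ->
    exists j : 'I_k.+1, (0 < j) /\ #|[set v in I | C v == j]| = 1.

Definition partition_exactly_hittable (n k : nat) (E : {set {set 'I_n}}) : Prop :=
  exists part : {set 'I_n} -> 'I_k,
    forall j : 'I_k, exactly_hittable [set I in E | part I == j].

(* Main.v *)
From Stdlib Require Import Classical.
Require Import Defs.
From mathcomp Require Import all_boot.
From mathcomp Require Import zify.
Set Implicit Arguments. Unset Strict Implicit. Unset Printing Implicit Defensive.

Definition LC n (X I : {set 'I_n}) (v : 'I_n) := forall x, x \in I -> x < v -> x \notin X.
Definition RC n (X I : {set 'I_n}) (v : 'I_n) := forall x, x \in I -> v < x -> x \notin X.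

Lemma card1_eq n (S : {set 'I_n}) v : v \in S -> #|S| = 1 -> forall x, x \in S -> x = v.
Proof.
move=> vS /eqP/cards1P [w Sw] x; rewrite Sw !inE in vS *.
by move=> /eqP ->; rewrite (eqP vS).
Qed.

Lemma card1_of n (S : {set 'I_n}) v : v \in S -> (forall x, x \in S -> x = v) -> #|S| = 1.
Proof.
move=> vS H; apply/eqP/cards1P; exists v; apply/setP => x; rewrite inE.
by apply/idP/eqP => [/H|->].
Qed.

Lemma LC_dom n (X Y : {set 'I_n}) v :
  (forall I, is_interval I -> v \in I -> LC X I v -> LC Y I v) \/
  (forall I, is_interval I -> v \in I -> LC Y I v -> LC X I v).
Proof.
case: (classic (forall I, is_interval I -> v \in I -> LC X I v -> LC Y I v)) => [h|h]; [by left|right].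
have [I1 [iI1 [vI1 [lx ly]]]] : exists I1, is_interval I1 /\ v \in I1 /\ LC X I1 v /\ ~ LC Y I1 v.
  apply: NNPP => hn; apply: h => I iI vI lx; apply: NNPP => ly; apply: hn; by exists I.
have [y [yI1 [yv yY]]] : exists y, y \in I1 /\ y < v /\ y \in Y.
  apply: NNPP => hn; apply: ly => y yI yv; apply/negP => yY; apply: hn; by exists y.
move=> I [_ iI] vI ly' x xI xv; apply/negP => xX.
case: (leqP x y) => hxy.
- have yI : y \in I by apply: (iI x y v) => //; exact: ltnW.
  by move: (ly' y yI yv); rewrite yY.
- have xI1 : x \in I1 by apply: (iI1.2 y x v) => //; exact: ltnW.
  by move: (lx x xI1 xv); rewrite xX.
Qed.

Lemma RC_dom n (X Y : {set 'I_n}) v :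
  (forall I, is_interval I -> v \in I -> RC X I v -> RC Y I v) \/
  (forall I, is_interval I -> v \in I -> RC Y I v -> RC X I v).
Proof.
case: (classic (forall I, is_interval I -> v \in I -> RC X I v -> RC Y I v)) => [h|h]; [by left|right].
have [I1 [iI1 [vI1 [lx ly]]]] : exists I1, is_interval I1 /\ v \in I1 /\ RC X I1 v /\ ~ RC Y I1 v.
  apply: NNPP => hn; apply: h => I iI vI lx; apply: NNPP => ly; apply: hn; by exists I.
have [y [yI1 [yv yY]]] : exists y, y \in I1 /\ v < y /\ y \in Y.
  apply: NNPP => hn; apply: ly => y yI yv; apply/negP => yY; apply: hn; by exists y.
move=> I [_ iI] vI ly' x xI xv; apply/negP => xX.
case: (leqP y x) => hxy.
- have yI : y \in I by apply: (iI v y x) => //; exact: ltnW.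
  by move: (ly' y yI yv); rewrite yY.
- have xI1 : x \in I1 by apply: (iI1.2 v x y) => //; exact: ltnW.
  by move: (lx x xI1 xv); rewrite xX.
Qed.

Lemma interval_side n (I : {set 'I_n}) v : is_interval I -> v \notin I ->
  (forall x, x \in I -> x < v) \/ (forall x, x \in I -> v < x).
Proof.
move=> [_ iI] vI.
case: (classic (forall x, x \in I -> x < v)) => h; [by left|right].
have [a [aI av]] : exists a, a \in I /\ ~ (a < v).
  apply: NNPP => hn; apply: h => x xI; apply: NNPP => hx; apply: hn; by exists x.
move/negP: av; rewrite -leqNgt => va.
move=> x xI; case: (ltngtP v x) => // h'.
- have : v \in I by apply: (iI x v a) => //; exact: ltnW.
  by rewrite (negbTE vI).
- have xv : x = v by apply: val_inj.
  by rewrite -xv xI in vI.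
Qed.

Lemma cardE_sum n (S : {set 'I_n}) : #|S| = \sum_(x : 'I_n) (x \in S : nat).
Proof.
by rewrite -sum1_card big_mkcond /=; apply: eq_bigr => x _; case: (x \in S).
Qed.

Lemma step n (A B X Y : {set 'I_n}) (v : 'I_n) (sl sr : bool) :
  (forall x, (x \in X) = (if x < v then x \in (if sl then A else B)
                          else if v < x then x \in (if sr then A else B) else true)) ->
  (forall x, (x \in Y) = (if x < v then x \in (if sl then B else A)
                          else if v < x then x \in (if sr then B else A) else false)) ->
  v \in A -> v \in B ->
  (forall I, is_interval I -> v \in I -> LC A I v -> LC (if sl then A else B) I v) ->
  (forall I, is_interval I -> v \in I -> LC B I v -> LC (if sl then A else B) I v) ->
  (forall I, is_interval I -> v \in I -> RC A I v -> RC (if sr then A else B) I v) ->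
  (forall I, is_interval I -> v \in I -> RC B I v -> RC (if sr then A else B) I v) ->
  (forall I, is_interval I -> #|A :&: I| = 1 \/ #|B :&: I| = 1 ->
     #|X :&: I| = 1 \/ #|Y :&: I| = 1) /\ #|X| + #|Y| + 1 = #|A| + #|B|.
Proof.
move=> hX hY vA vB hlA hlB hrA hrB; split.
- move=> I iI H1; case: (boolP (v \in I)) => vI.
  + left.
    have lcA : forall S : {set 'I_n}, v \in S -> #|S :&: I| = 1 -> LC S I v /\ RC S I v.
      move=> S vS h1; split=> x xI xv; apply/negP => xS;
        have := @card1_eq n (S :&: I) v _ h1 x;
        (rewrite !inE xS xI vS vI => /(_ isT isT) xe);
        by rewrite xe ltnn in xv.
    have [hL hR] : LC (if sl then A else B) I v /\ RC (if sr then A else B) I v.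
      case: H1 => h1.
      * have [l r] := lcA A vA h1; split; [exact: hlA|exact: hrA].
      * have [l r] := lcA B vB h1; split; [exact: hlB|exact: hrB].
    apply: (card1_of (v := v)); first by rewrite !inE hX ltnn vI.
    move=> x; rewrite !inE hX => /andP [hx xI].
    case: ltngtP hx => h hx.
    * by move: (hL x xI h); rewrite hx.
    * by move: (hR x xI h); rewrite hx.
    * by apply: val_inj.
  + have [hs|hs] := interval_side iI vI.
    * have eX : X :&: I = (if sl then A else B) :&: I.
        by apply/setP => x; rewrite !inE hX; case xI: (x \in I); rewrite ?andbF // (hs x xI) andbT.
      have eY : Y :&: I = (if sl then B else A) :&: I.
        by apply/setP => x; rewrite !inE hY; case xI: (x \in I); rewrite ?andbF // (hs x xI) andbT.
      rewrite eX eY; case: sl {hX hY hlA hlB eX eY} => /=; tauto.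
    * have eX : X :&: I = (if sr then A else B) :&: I.
        apply/setP => x; rewrite !inE hX; case xI: (x \in I); rewrite ?andbF //.
        by have h := hs x xI; rewrite ltnNge (ltnW h) /= h andbT.
      have eY : Y :&: I = (if sr then B else A) :&: I.
        apply/setP => x; rewrite !inE hY; case xI: (x \in I); rewrite ?andbF //.
        by have h := hs x xI; rewrite ltnNge (ltnW h) /= h andbT.
      rewrite eX eY; case: sr {hX hY hrA hrB eX eY} => /=; tauto.
- rewrite !cardE_sum -!big_split /= (bigD1 v) //= [in RHS](bigD1 v) //=.
  rewrite hX hY ltnn vA vB /=.
  have -> : \sum_(i < n | i != v) ((i \in X) + (i \in Y))
          = \sum_(i < n | i != v) ((i \in A) + (i \in B)).
    apply: eq_bigr => x xv; rewrite hX hY.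
    case: ltngtP => h.
    * by clear hX hY hlA hlB; case: sl; rewrite // addnC.
    * by clear hX hY hrA hrB; case: sr; rewrite // addnC.
    * by have e : x = v := val_inj h; rewrite e eqxx in xv.
  by rewrite /= addn0 addnAC.
Qed.

Definition valid n k (E : {set {set 'I_n}}) (part : {set 'I_n} -> 'I_k) (T : 'I_k -> {set 'I_n}) :=
  forall I, I \in E -> #|T (part I) :&: I| = 1.

Lemma build_C n k (E : {set {set 'I_n}}) (part : {set 'I_n} -> 'I_k) (T : 'I_k -> {set 'I_n}) : valid E part T ->
  (forall p q v, v \in T p -> v \in T q -> p = q) ->
  exists C : 'I_n -> 'I_k.+1, conflict_free E C.
Proof.
move=> HT Hd.
exists (fun v => if [pick j | v \in T j] is Some j then inord j.+1 else ord0).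
move=> I IE; exists (inord (part I).+1); split.
  by rewrite inordK // ltnS.
rewrite -(HT I IE); apply: eq_card => v; rewrite !inE andbC; congr (_ && _).
case: pickP => [j vj | none].
- apply/eqP/idP => [h|h].
  + have := f_equal (@nat_of_ord _) h; rewrite !inordK ?ltnS // => [[e]].
    by have -> : part I = j by apply: val_inj.
  + by rewrite (Hd _ _ _ vj h).
- rewrite none; apply/eqP => h; have := f_equal (@nat_of_ord _) h.
  by rewrite inordK ?ltnS.
Qed.

Lemma coll_step n k (E : {set {set 'I_n}}) (part : {set 'I_n} -> 'I_k) (T : 'I_k -> {set 'I_n}) (p q : 'I_k) v :
  interval_hypergraph E -> valid E part T -> p != q -> v \in T p -> v \in T q ->
  exists (part' : {set 'I_n} -> 'I_k) (T' : 'I_k -> {set 'I_n}), \sum_(j < k) #|T' j| + 1 = \sum_(j < k) #|T j| /\ valid E part' T'.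
Proof.
move=> HE HT pq vA vB.
set A := T p in vA *; set B := T q in vB *.
have [sl [hlA hlB]] : exists sl : bool,
  (forall I, is_interval I -> v \in I -> LC A I v -> LC (if sl then A else B) I v) /\
  (forall I, is_interval I -> v \in I -> LC B I v -> LC (if sl then A else B) I v).
  by case: (LC_dom A B v) => h; [exists false | exists true].
have [sr [hrA hrB]] : exists sr : bool,
  (forall I, is_interval I -> v \in I -> RC A I v -> RC (if sr then A else B) I v) /\
  (forall I, is_interval I -> v \in I -> RC B I v -> RC (if sr then A else B) I v).
  by case: (RC_dom A B v) => h; [exists false | exists true].
pose X := [set x : 'I_n | if x < v then x \in (if sl then A else B)
                   else if v < x then x \in (if sr then A else B) else true].
pose Y := [set x : 'I_n | if x < v then x \in (if sl then B else A)
                   else if v < x then x \in (if sr then B else A) else false].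
have [Hst Hsz] := @step n A B X Y v sl sr (fun x => ltac:(by rewrite inE))
   (fun x => ltac:(by rewrite inE)) vA vB hlA hlB hrA hrB.
have qp : (q == p) = false by rewrite eq_sym; exact: negbTE.
exists (fun I => if (part I == p) || (part I == q) then (if #|X :&: I| == 1 then p else q) else part I).
exists (fun j => if j == p then X else if j == q then Y else T j).
split.
- rewrite (bigD1 p) //= [in RHS](bigD1 p) //= (bigD1 q) ?qp //= [in RHS](bigD1 q) ?qp //=.
  rewrite !eqxx.
  have -> : \sum_(i < k | (i != p) && (i != q))
              #|if i == p then X else if i == q then Y else T i|
          = \sum_(i < k | (i != p) && (i != q)) #|T i|.
    by apply: eq_bigr => j /andP [/negbTE -> /negbTE ->].
  rewrite -/A -/B !addnA -Hsz; by rewrite addnAC.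
- move=> I IE /=; case hpq: ((part I == p) || (part I == q)).
  + have H1 : #|A :&: I| = 1 \/ #|B :&: I| = 1.
      by case/orP: hpq => /eqP e; [left|right]; rewrite /A /B -e; exact: HT.
    have H2 := Hst I (HE I IE) H1.
    case hX: (#|X :&: I| == 1).
    * by rewrite eqxx; apply/eqP.
    * rewrite qp eqxx; case: H2 => // hX'.
      by rewrite hX' eqxx in hX.
  + move/negbT/norP: hpq => [hp hq]; rewrite (negbTE hp) (negbTE hq); exact: HT.
Qed.

Lemma main_ind n k (E : {set {set 'I_n}}) : interval_hypergraph E ->
  forall m part (T : 'I_k -> {set 'I_n}), \sum_(j < k) #|T j| <= m -> valid E part T ->
  exists C : 'I_n -> 'I_k.+1, conflict_free E C.
Proof.
move=> HE; elim=> [|m IH] part T Hm HT.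
all: case: (classic (exists p q v, p != q /\ v \in T p /\ v \in T q)).
- move=> [p [q [v [pq [vp vq]]]]].
  have [part' [T' [hs _]]] := coll_step HE HT pq vp vq.
  by move: Hm; rewrite -hs addn1.
- move=> hn; apply: (build_C HT) => p q v vp vq; apply: NNPP => pq; apply: hn.
  by exists p, q, v; split; [apply/eqP|].
- move=> [p [q [v [pq [vp vq]]]]].
  have [part' [T' [hs hv]]] := coll_step HE HT pq vp vq.
  apply: (IH part' T') => //; by move: Hm; rewrite -hs addn1 ltnS.
- move=> hn; apply: (build_C HT) => p q v vp vq; apply: NNPP => pq; apply: hn.
  by exists p, q, v; split; [apply/eqP|].
Qed.

Theorem theorem4 (n k : nat) (E : {set {set 'I_n}}) :
  interval_hypergraph E -> 1 <= k ->
  (partition_exactly_hittable k E <->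
   exists C : 'I_n -> 'I_k.+1, conflict_free E C).
Proof.
move=> HE hk; split.
- move=> [part Hp].
  pose T := fun j : 'I_k => odflt set0
     [pick S : {set 'I_n} | [forall I in [set I in E | part I == j], #|S :&: I| == 1]].
  apply: (@main_ind n k E HE _ part T (leqnn _)).
  move=> I IE; rewrite /T; case: pickP => [S /forall_inP hS | none] /=.
  + by apply/eqP; apply: hS; rewrite inE IE eqxx.
  + have [T0 hT0] := Hp (part I).
    have := none T0; move/negbT/negP; case; apply/forall_inP => J hJ.
    by apply/eqP; apply: hT0.
- case: k hk => // k _ [C HC].
  pose part := fun I : {set 'I_n} =>
    if [pick j : 'I_k.+2 | (0 < j) && (#|[set v in I | C v == j]| == 1)] is Some j
    then (inord j.-1 : 'I_k.+1) else ord0.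
  exists part => j.
  exists [set v | C v == inord j.+1] => I; rewrite inE => /andP [IE /eqP pj].
  move: pj; rewrite /part; case: pickP => [c /andP [c0 /eqP hc] | none].
  + move=> e; have : c.-1 = j.
      rewrite -e inordK //; have := ltn_ord c; case: (val c) => //.
    move=> ec; have cj : c = inord j.+1.
      apply: ord_inj; rewrite inordK; [lia | by rewrite ltnS ltn_ord].
    apply: (etrans _ hc); apply: eq_card => v; rewrite !inE cj andbC.
    done.
  + have [c [c0 hc]] := HC I IE.
    by have := none c; rewrite c0 hc eqxx.
Qed.
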